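(* Let $q$ be a prime power, $s,\ell$ positive integers, $\alpha,\beta\in\mathbb{F}_q^*$, let $r$ be the multiplicative order of $\beta$, and assume $q\equiv 1\pmod{r\ell}$. Let $\omega\in\mathbb{F}_q$ be a primitive $r\ell$-th root of unity with $\omega^\ell=\beta$, and for $k=0,\dots,\ell-1$ let $\eta_k(y)=\prod_{j\ne k,\,0\le j\le \ell-1}\frac{y-\omega^{1+jr}}{\omega^{1+kr}-\omega^{1+jr}}$. Let $\mathcal{C}$ be an ideal of $\mathcal{R}=\mathbb{F}_q[x,y]/\langle x^s-\alpha,y^\ell-\beta\rangle$, let $I_j=\{f(x)\in\mathbb{F}_q[x]/\langle x^s-\alpha\rangle:\eta_j(y)f(x)\in\mathcal{C}\}$, let $p_j(x)$ be the unique monic divisor of $x^s-\alpha$ generating $I_j$, and let $a_j=\deg p_j(x)$, for $j=0,\dots,\ell-1$. Then the elements $$x^i p_j(x)\eta_j(y),\qquad 0\le j\le \ell-1,\ \ 0\le i\le s-a_j-1,$$ form a basis of $\mathcal{C}$ over $\mathbb{F}_q$, i.e. the matrix whose rows are (the coefficient vectors of) these elements, ordered by $j$ and then by $i$, is a generator matrix of $\mathcal{C}$.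
   Context: An element $\sum_{i,j}c_{i,j}x^iy^j$ of $\mathcal{R}$ (with $0\le i\le s-1$, $0\le j\le \ell-1$) is identified with the $s\times\ell$ array $(c_{i,j})$, i.e. a vector of length $s\ell$ over $\mathbb{F}_q$; ideals of $\mathcal{R}$ are two-dimensional $(\alpha,\beta)$-constacyclic codes. *)

(* Defs.v *)
From HB Require Import structures.
From mathcomp Require Import all_boot all_order all_algebra all_field.
Set Implicit Arguments. Unset Strict Implicit. Unset Printing Implicit Defensive.
Import GRing.Theory.
Local Open Scope ring_scope.

(* Elements of F[x,y] are represented as {poly {poly F}}: polynomials in the
   outer variable y whose coefficients are polynomials in the inner variable x.
   The class of P in R = F[x,y]/<x^s - alpha, y^l - beta> is identified with
   its s x l coefficient array (c_{i,j}) (coefficient of x^i y^j of the reduced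
   representative), i.e. an element of 'M[F]_(s, l). *)
Definition toR (F : fieldType) (s l : nat) (alpha beta : F)
    (P : {poly {poly F}}) : 'M[F]_(s, l) :=
  \matrix_(i < s, j < l)
    (((P %% ('X^l - (beta%:P)%:P))`_j) %% ('X^s - alpha%:P))`_i.

Definition is_idealR (F : fieldType) (s l : nat) (alpha beta : F)
    (C : {vspace 'M[F]_(s, l)}) : Prop :=
  forall P Q : {poly {poly F}},
    toR s l alpha beta P \in C -> toR s l alpha beta (Q * P) \in C.

Definition eta (F : fieldType) (l r : nat) (w : F) (k : nat) : {poly F} :=
  \prod_(0 <= j < l | j != k)
    (('X - (w ^+ (1 + j * r))%:P) *
       ((w ^+ (1 + k * r) - w ^+ (1 + j * r))^-1)%:P).

Definition etaf (F : fieldType) (l r : nat) (w : F) (k : nat)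
    (f : {poly F}) : {poly {poly F}} :=
  f%:P * map_poly polyC (eta l r w k).

Arguments toR {F} s l alpha beta P.
Arguments is_idealR {F} s l alpha beta C.
Arguments eta {F} l r w k.
Arguments etaf {F} l r w k f.

(* Main.v *)
Require Import Defs.
From HB Require Import structures.
From mathcomp Require Import all_boot all_order all_algebra all_field.
From mathcomp Require Import zify.
Set Implicit Arguments. Unset Strict Implicit. Unset Printing Implicit Defensive.
Import GRing.Theory.
Local Open Scope ring_scope.

Section FreeGen.
Variables (K : fieldType) (vT : vectType K).

Lemma sum_seq_ord n (v : nat -> vT) (c : nat -> K) :
  \sum_(i < size (map v (iota 0 n))) c i *: (map v (iota 0 n))`_i
  = \sum_(i < n) c i *: v i.
Proof.
rewrite -(big_mkord xpredT (fun i => c i *: (map v (iota 0 n))`_i)).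
rewrite size_map size_iota big_mkord; apply: eq_bigr => i _.
by rewrite (nth_map 0) ?size_iota // nth_iota.
Qed.

Lemma span1 n (v : nat -> vT) u :
  u \in <<map v (iota 0 n)>>%VS -> {c : nat -> K | u = \sum_(i < n) c i *: v i}.
Proof.
move=> Hu; pose T := map_tuple v (iota_tuple n 0).
have Hu' : u \in <<T>>%VS by [].
pose c m := oapp (fun i => coord T i u) 0 (insub m).
exists c; rewrite {1}(coord_span Hu'); apply: eq_bigr => i _.
by rewrite /c valK /= (nth_map 0) ?size_iota // nth_iota.
Qed.

Lemma free1 n (v : nat -> vT) :
  (forall c : nat -> K, \sum_(i < n) c i *: v i = 0 -> forall i, (i < n)%N -> c i = 0) ->
  free (map v (iota 0 n)).
Proof.
move=> H; pose T := map_tuple v (iota_tuple n 0).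
suff : free T by []. apply/freeP => k Hk i.
pose c m := oapp k 0 (insub m).
have := H c _ i (ltn_ord i); rewrite /c valK; apply.
apply: (etrans _ Hk); apply: eq_bigr => j _.
by rewrite valK /= (nth_map 0) ?size_iota // nth_iota.
Qed.

Lemma free_pairs (l : nat) (n : nat -> nat) (v : nat -> nat -> vT) :
  (forall k : nat -> nat -> K,
     \sum_(j < l) \sum_(i < n j) k j i *: v j i = 0 ->
     forall j i, (j < l)%N -> (i < n j)%N -> k j i = 0) ->
  free [seq v j i | j <- iota 0 l, i <- iota 0 (n j)].
Proof.
move=> H.
pose B j := [seq v j i | i <- iota 0 (n j)].
have -> : [seq v j i | j <- iota 0 l, i <- iota 0 (n j)] = \big[cat/[::]]_(j < l) B j.
  rewrite -(big_mkord xpredT) /index_iota subn0.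
  by elim: (iota 0 l) => [|a t IH]; rewrite ?big_nil ?big_cons //= IH.
apply: bigcat_free => [|j _].
  apply/directv_sum_independent => us Hus Hsum j1 _.
  pose c (j : 'I_l) := sval (span1 (Hus j isT)).
  have Hc j : us j = \sum_(i < n j) c j i *: v j i by rewrite /c; case: (span1 _).
  pose k j0 i := if (j0 < l)%N =P true is ReflectT h then c (Ordinal h) i else 0.
  have Hk (j0 : 'I_l) i : k j0 i = c j0 i.
    rewrite /k; case: eqP => [h|/negP]; last by rewrite ltn_ord.
    by congr (c _ _); apply: val_inj.
  have Hz : forall j0 i, (j0 < l)%N -> (i < n j0)%N -> k j0 i = 0.
    apply: H; apply: (etrans _ Hsum); apply: eq_bigr => j0 _; rewrite Hc.
    by apply: eq_bigr => i _; rewrite Hk.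
  rewrite Hc big1 // => i _; rewrite -Hk Hz ?scale0r //.
rewrite /B; apply: (@free1 (n j) (v j)) => c Hc i Hi.
pose k j0 i := if j0 == val j then c i else 0.
have := H k _ j i (ltn_ord j) Hi; rewrite /k eqxx; apply.
rewrite (bigD1 j) //= [X in _ + X]big1 ?addr0.
  by apply: (etrans _ Hc); apply: eq_bigr => i0 _; rewrite eqxx.
move=> j0 /negPf Hj; apply: big1 => i0 _.
by rewrite (_ : (val j0 == val j) = false) ?scale0r.
Qed.
End FreeGen.
Lemma om_inj (F : fieldType) (l r : nat) (w : F) j k :
  (r * l).-primitive_root w -> (j < l)%N -> (k < l)%N ->
  w ^+ (1 + j * r) = w ^+ (1 + k * r) -> j = k.
Proof.
move=> pw jl kl /eqP; rewrite (eq_prim_root_expr pw) eqn_modDl.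
have r0 : (0 < r)%N by have := prim_order_gt0 pw; rewrite muln_gt0 => /andP[].
rewrite !modn_small; first by rewrite eqn_pmul2r // => /eqP.
  by rewrite mulnC ltn_pmul2l.
by rewrite mulnC ltn_pmul2l.
Qed.

Lemma size_prod_lin (F : fieldType) (I : Type) (s : seq I) (P : pred I)
    (a b : I -> F) :
  (size (\prod_(j <- s | P j) (('X - (a j)%:P) * (b j)%:P))%R <= (count P s).+1)%N.
Proof.
elim: s => [|x s IH]; first by rewrite big_nil size_poly1.
rewrite big_cons /=; case: (P x) => //=.
apply: leq_trans (size_mul_leq _ _) _.
have h : (size ((('X - (a x)%:P) * (b x)%:P))%R <= 2)%N.
  apply: leq_trans (size_mul_leq _ _) _.
  by rewrite size_XsubC size_polyC; case: (_ != 0).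
rewrite -subn1 leq_subLR; apply: leq_trans (leq_add h IH) _; lia.
Qed.

Lemma size_eta (F : fieldType) (l r : nat) (w : F) k :
  (k < l)%N -> (size (Defs.eta l r w k) <= l)%N.
Proof.
move=> kl; apply: leq_trans (size_prod_lin _ _ _ _) _.
have h := count_predC (pred1 k) (index_iota 0 l).
rewrite /index_iota subn0 size_iota in h.
rewrite (count_uniq_mem _ (iota_uniq 0 l)) mem_iota /= kl in h.
have -> : count (fun j => j != k) (index_iota 0 l) = count (predC (pred1 k)) (iota 0 l).
  by rewrite /index_iota subn0; apply: eq_count => x.
move: h; rewrite [nat_of_bool true]/= add1n => h. by rewrite -[X in (_ < X)%N]h.
Qed.

Lemma eta_eval (F : fieldType) (l r : nat) (w : F) k m :
  (r * l).-primitive_root w -> (k < l)%N -> (m < l)%N ->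
  (Defs.eta l r w k).[w ^+ (1 + m * r)] = (k == m)%:R.
Proof.
move=> pw kl ml; rewrite /Defs.eta horner_prod.
case: eqP => [<-|/eqP km].
  rewrite big1_seq // => j /andP[jk]; rewrite mem_index_iota => /andP[_ jl].
  rewrite hornerM hornerXsubC hornerC divff // subr_eq0.
  apply/eqP => /(om_inj pw kl jl) e; by rewrite e eqxx in jk.
rewrite -big_filter (bigD1_seq m) /=; first by rewrite hornerM hornerXsubC subrr !mul0r.
  by rewrite mem_filter eq_sym km mem_index_iota ml.
exact/filter_uniq/iota_uniq.
Qed.

Lemma interp0 (F : fieldType) (l r : nat) (w : F) (p : {poly F}) :
  (r * l).-primitive_root w -> (size p <= l)%N ->
  (forall m, (m < l)%N -> p.[w ^+ (1 + m * r)] = 0) -> p = 0.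
Proof.
move=> pw sp H.
apply: (@roots_geq_poly_eq0 _ p [seq w ^+ (1 + m * r) | m <- iota 0 l]).
- apply/allP => x /mapP [m]; rewrite mem_iota add0n => /andP[_ ml] ->.
  by rewrite /root H.
- rewrite map_inj_in_uniq ?iota_uniq // => a b.
  rewrite !mem_iota !add0n => /andP[_ ha] /andP[_ hb].
  exact: om_inj pw ha hb.
- by rewrite size_map size_iota.
Qed.

Lemma om_pow (F : fieldType) (l r : nat) (w : F) m :
  (r * l).-primitive_root w -> (w ^+ (1 + m * r)) ^+ l = w ^+ l.
Proof.
move=> pw; rewrite -exprM mulnDl mul1n exprD -mulnA [(m * _)%N]mulnC exprM.
by rewrite (prim_expr_order pw) expr1n mulr1.
Qed.

Lemma toR_etaf (F : fieldType) s l r (alpha beta w : F) k f :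
  (0 < l)%N -> (k < l)%N ->
  toR s l alpha beta (etaf l r w k f) =
  \matrix_(i < s, j < l) ((f %% ('X^s - alpha%:P))`_i * (Defs.eta l r w k)`_j).
Proof.
move=> l0 kl; apply/matrixP => i j; rewrite !mxE.
rewrite (@Pdiv.CommonIdomain.modp_small _ (etaf l r w k f)); last first.
  rewrite /etaf mul_polyC size_XnsubC //.
  apply: leq_ltn_trans (size_scale_leq _ _) _.
  by rewrite size_map_polyC ltnS size_eta.
rewrite /etaf coefCM coef_map /= mulrC mul_polyC modpZl coefZ mulrC.
done.
Qed.

Lemma toR_etafDZ (F : fieldType) s l r (alpha beta w : F) k a f g :
  (0 < l)%N -> (k < l)%N ->
  toR s l alpha beta (etaf l r w k (a *: f + g)) =
  a *: toR s l alpha beta (etaf l r w k f) + toR s l alpha beta (etaf l r w k g).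
Proof.
move=> l0 kl; rewrite !toR_etaf //; apply/matrixP => i j; rewrite !mxE.
by rewrite modpD modpZl coefD coefZ mulrDl mulrA.
Qed.

Lemma toR_etaf0 (F : fieldType) s l r (alpha beta w : F) k :
  (0 < l)%N -> (k < l)%N ->
  toR s l alpha beta (etaf l r w k 0) = 0.
Proof.
move=> l0 kl; rewrite !toR_etaf //; apply/matrixP => i j; rewrite !mxE.
by rewrite mod0p coef0 mul0r.
Qed.

Lemma toR_etaf_sum (F : fieldType) s l r (alpha beta w : F) k n
    (c : nat -> F) (h : nat -> {poly F}) :
  (0 < l)%N -> (k < l)%N ->
  toR s l alpha beta (etaf l r w k (\sum_(i < n) c i *: h i)) =
  \sum_(i < n) c i *: toR s l alpha beta (etaf l r w k (h i)).
Proof.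
move=> l0 kl; elim: n => [|n IH]; first by rewrite !big_ord0 toR_etaf0.
by rewrite !big_ord_recr /= addrC toR_etafDZ // IH addrC.
Qed.

Lemma toR_etaf_mod (F : fieldType) s l r (alpha beta w : F) k f g :
  (0 < l)%N -> (k < l)%N ->
  f %% ('X^s - alpha%:P) = g %% ('X^s - alpha%:P) ->
  toR s l alpha beta (etaf l r w k f) = toR s l alpha beta (etaf l r w k g).
Proof. by move=> l0 kl e; rewrite !toR_etaf // e. Qed.

Lemma lagr_Xn (F : fieldType) (l r : nat) (w : F) j :
  (r * l).-primitive_root w -> (j < l)%N ->
  \sum_(k < l) (w ^+ (1 + k * r)) ^+ j *: Defs.eta l r w k = 'X^j.
Proof.
move=> pw jl; apply/eqP; rewrite -subr_eq0; apply/eqP; apply: (interp0 pw).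
  apply: leq_trans (size_add _ _) _; rewrite geq_max size_opp size_polyXn jl andbT.
  apply: (big_ind (fun p : {poly F} => (size p <= l)%N)) => //.
  - by rewrite size_poly0.
  - by move=> p q hp hq; apply: leq_trans (size_add _ _) _; rewrite geq_max hp hq.
  - by move=> k _; apply: leq_trans (size_scale_leq _ _) _; rewrite size_eta.
move=> m ml; rewrite hornerD hornerN horner_sum hornerXn.
rewrite (bigD1 (Ordinal ml)) //= big1 ?addr0.
  by rewrite hornerZ eta_eval // eqxx mulr1 subrr.
move=> k km; rewrite hornerZ eta_eval //.
by rewrite (_ : (val k == m) = false) ?mulr0 //; apply/negbTE; move: km; apply: contra => /eqP e; apply/eqP/val_inj.
Qed.

Lemma horner_modp (F : fieldType) (p q : {poly F}) x :
  q.[x] = 0 -> (p %% q).[x] = p.[x].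
Proof. by move=> hq; rewrite [in RHS](divp_eq p q) hornerD hornerM hq mulr0 add0r. Qed.

Lemma eta_mulX (F : fieldType) (l r : nat) (beta w : F) k j :
  (r * l).-primitive_root w -> w ^+ l = beta -> (k < l)%N ->
  (Defs.eta l r w k * 'X^j) %% ('X^l - beta%:P) =
  (w ^+ (1 + k * r)) ^+ j *: Defs.eta l r w k.
Proof.
move=> pw wl kl.
have l0 : (0 < l)%N by apply: leq_ltn_trans kl.
apply/eqP; rewrite -subr_eq0; apply/eqP; apply: (interp0 pw).
  apply: leq_trans (size_add _ _) _; rewrite geq_max size_opp.
  rewrite (leq_trans (size_scale_leq _ _)) ?size_eta // andbT.
  have := ltn_modpN0 (Defs.eta l r w k * 'X^j) (q := 'X^l - beta%:P).
  rewrite size_XnsubC //; apply; rewrite -size_poly_gt0 size_XnsubC //.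
move=> m ml; rewrite hornerD hornerN horner_modp; last first.
  by rewrite hornerD hornerN hornerXn hornerC om_pow // wl subrr.
rewrite hornerM hornerXn hornerZ eta_eval //.
case: (eqVneq k m) => [->|km]; first by rewrite mul1r mulr1 subrr.
by rewrite mul0r mulr0 subrr.
Qed.

Lemma toR_addM (F : fieldType) s l (alpha beta : F) B E :
  (0 < l)%N ->
  toR s l alpha beta (B * ('X^l - (beta%:P)%:P) + E) = toR s l alpha beta E.
Proof.
move=> l0; have ul : lead_coef ('X^l - (beta%:P)%:P) \in GRing.unit.
  by rewrite (monicP (monicXnsubC _ l0)) unitr1.
by rewrite /toR (Pdiv.IdomainUnit.modpD ul) Pdiv.CommonIdomain.modp_mull add0r.
Qed.

Lemma ideal_comp (F : fieldType) s l r (alpha beta w : F) k (cq : 'I_l -> {poly F}) :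
  (r * l).-primitive_root w -> w ^+ l = beta -> (k < l)%N ->
  toR s l alpha beta ((Defs.eta l r w k)^:P * \sum_(j < l) (cq j)%:P * 'X^j) =
  toR s l alpha beta (etaf l r w k (\sum_(j < l) (w ^+ (1 + k * r)) ^+ j *: cq j)).
Proof.
move=> pw wl kl.
have l0 : (0 < l)%N by apply: leq_ltn_trans kl.
set om := w ^+ (1 + k * r); set et := Defs.eta l r w k.
set Yb := 'X^l - beta%:P.
have e' j : et^:P * 'X^j = ((et * 'X^j) %/ Yb)^:P * ('X^l - (beta%:P)%:P)
                          + (om ^+ j)%:P%:P * et^:P.
  have e : et * 'X^j = ((et * 'X^j) %/ Yb) * Yb + om ^+ j *: et.
    by rewrite {1}(divp_eq (et * 'X^j) Yb) eta_mulX.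
  have := congr1 (map_poly polyC) e.
  rewrite rmorphD rmorphM /= map_polyXn => ->.
  by rewrite rmorphM /= rmorphB /= map_polyXn map_polyC map_polyZ /= mul_polyC.
rewrite mulr_sumr.
under eq_bigr do rewrite mulrCA e' mulrDr.
rewrite big_split /=.
have -> : \sum_(i < l) (cq i)%:P * ((((et * 'X^i) %/ Yb)^:P) * ('X^l - (beta%:P)%:P))
  = (\sum_(i < l) (cq i)%:P * ((et * 'X^i) %/ Yb)^:P) * ('X^l - (beta%:P)%:P).
  by rewrite mulr_suml; apply: eq_bigr => i _; rewrite mulrA.
rewrite toR_addM // /etaf.
congr (toR _ _ _ _ _); rewrite rmorph_sum /= mulr_suml.
apply: eq_bigr => i _; rewrite mulrA -rmorphM /= -[om ^+ i *: _]mul_polyC. by rewrite [cq i * _]mulrC.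
Qed.
Lemma sum_delta (R : ringType) n (e : 'I_n -> R) (b : 'I_n) :
  \sum_(j < n) e j * (val b == val j)%:R = e b.
Proof.
rewrite (bigD1 b) //= eqxx mulr1 big1 ?addr0 // => j hj.
by rewrite (_ : (val b == val j) = false) ?mulr0 //; apply/negbTE; rewrite eq_sym.
Qed.

Lemma coef_cq (F : fieldType) s (d : 'I_s -> F) (a : 'I_s) :
  (\sum_(i < s) d i *: 'X^i)`_a = d a.
Proof.
rewrite coef_sum -[RHS](sum_delta d a); apply: eq_bigr => i _.
by rewrite coefZ coefXn.
Qed.

Lemma size_cq (F : fieldType) s (d : 'I_s -> F) :
  (size (\sum_(i < s) d i *: 'X^i : {poly F})%R <= s)%N.
Proof.
apply: (big_ind (fun p : {poly F} => (size p <= s)%N)).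
- by rewrite size_poly0.
- by move=> p q hp hq; apply: leq_trans (size_add _ _) _; rewrite geq_max hp hq.
- move=> i _; apply: leq_trans (size_scale_leq _ _) _.
  by rewrite size_polyXn.
Qed.

Lemma poly_take_size (F : fieldType) (p : {poly F}) n :
  (size p <= n)%N -> p = \poly_(i < n) p`_i.
Proof.
move=> sp; apply/polyP => i; rewrite coef_poly; case: ifP => // /negbT.
by rewrite -leqNgt => h; rewrite nth_default // (leq_trans sp h).
Qed.
Theorem theorem2 (F : finFieldType) (s l r : nat) (alpha beta w : F)
  (C : {vspace 'M[F]_(s, l)}) (p : nat -> {poly F}) :
  (0 < s)%N -> (0 < l)%N ->
  alpha != 0 -> beta != 0 ->
  r.-primitive_root beta ->
  #|F| = 1 %[mod r * l] ->
  (r * l).-primitive_root w -> w ^+ l = beta ->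
  is_idealR s l alpha beta C ->
  (forall j, (j < l)%N ->
     [/\ p j \is monic, p j %| 'X^s - alpha%:P &
         forall f : {poly F},
           toR s l alpha beta (etaf l r w j f) \in C <->
           exists g : {poly F},
             f %% ('X^s - alpha%:P) = (g * p j) %% ('X^s - alpha%:P)]) ->
  basis_of C
    [seq toR s l alpha beta (etaf l r w j ('X^i * p j))
       | j <- iota 0 l, i <- iota 0 (s - (size (p j)).-1)].
Proof.
move=> s0 l0 a0 b0 pb hq pw wl hI hp.
set Xs := 'X^s - alpha%:P.
set n := fun j => (s - (size (p j)).-1)%N.
set v := fun j i => toR s l alpha beta (etaf l r w j ('X^i * p j)).
have Xs0 : Xs != 0 by rewrite -size_poly_gt0 size_XnsubC.
have pn0 j : (j < l)%N -> p j != 0.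
  by move=> jl; have [/monic_neq0 -> _ _] := hp j jl.
have sp j : (j < l)%N -> (size (p j) <= s.+1)%N.
  move=> jl; have [_ d _] := hp j jl.
  by rewrite -(size_XnsubC alpha s0); apply: dvdp_leq.
have inspan k g : (k < l)%N ->
    toR s l alpha beta (etaf l r w k (g * p k)) \in <<[seq v j i | j <- iota 0 l, i <- iota 0 (n j)]>>%VS.
  move=> kl; have [_ d _] := hp k kl.
  set q := Xs %/ p k.
  have Xq : q * p k = Xs by rewrite divpK.
  have q0 : q != 0 by apply: contraNneq Xs0 => e; rewrite -Xq e mul0r.
  have e : (g * p k) %% Xs = ((g %% q) * p k) %% Xs.
    by rewrite {1}(divp_eq g q) mulrDl -mulrA Xq modpD modp_mull add0r.
  rewrite (@toR_etaf_mod F s l r alpha beta w k _ _ l0 kl e).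
  have sz : (size (g %% q)%R <= n k)%N.
    have h1 : (size (g %% q)%R < size q)%N by rewrite ltn_modp.
    have h2 := size_mul q0 (pn0 k kl).
    rewrite Xq size_XnsubC // in h2.
    have h3 : (0 < size (p k))%N by rewrite size_poly_gt0 pn0.
    rewrite /n; move: h1 h2 h3; rewrite -!subn1; move: (size q) (size (p k)) (size (g %% q)%R) => x y z; lia.
  rewrite (poly_take_size sz) poly_def mulr_suml.
  under eq_bigr do rewrite -scalerAl.
  rewrite (@toR_etaf_sum F s l r alpha beta w k (n k) (fun i => (g %% q)`_i) (fun i => 'X^i * p k) l0 kl).
  apply: rpred_sum => i _; apply: rpredZ; apply: memv_span.
  apply/allpairsPdep; exists k, (nat_of_ord i); split => //.
    by rewrite mem_iota add0n kl.
  by rewrite mem_iota add0n ltn_ord.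
rewrite /basis_of; apply/andP; split; last first.
  apply: (@free_pairs F _ l n v) => k Hk j1 i1 jl il.
  pose G j := (\poly_(i < n j) k j i) * p j.
  have HG (j : 'I_l) : \sum_(i < n j) k j i *: v j i = toR s l alpha beta (etaf l r w j (G j)).
    rewrite /G poly_def mulr_suml.
    rewrite (_ : \sum_(i < n j) (k j i *: 'X^i) * p j = \sum_(i < n j) k j i *: ('X^i * p j)); last by apply: eq_bigr => i _; rewrite scalerAl.
    by rewrite (@toR_etaf_sum F s l r alpha beta w j (n j) (k j) (fun i => 'X^i * p j) l0 (ltn_ord j)).
  have sG j : (j < l)%N -> (size (G j) <= s)%N.
    move=> jl'; apply: leq_trans (size_mul_leq _ _) _.
    have := size_poly (n j) (k j); have := sp j jl'; rewrite /n -!subn1.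
    move: (size (p j)) (size (\poly_(i < (s - (size (p j) - 1))) k j i)) => x y; lia.
  have Hsum : \sum_(j < l) toR s l alpha beta (etaf l r w j (G j)) = 0.
    transitivity (\sum_(j < l) \sum_(i < n j) k j i *: v j i); last exact: Hk.
    by apply: eq_bigr => j0 _; rewrite HG.
  have Hpoly (a : 'I_s) : \sum_(j < l) (G j)`_a *: Defs.eta l r w j = 0.
    apply/polyP => b; rewrite coef0 coef_sum.
    case: (ltnP b l) => bl.
      have := congr1 (fun M : 'M_(s, l) => M a (Ordinal bl)) Hsum; rewrite summxE mxE /=.
      under eq_bigr => j _ do rewrite (@toR_etaf F s l r alpha beta w j _ l0 (ltn_ord j)) mxE.
      move=> H; rewrite -[RHS]H; apply: eq_bigr => j _; rewrite coefZ modp_small //.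
      by rewrite size_XnsubC // ltnS sG.
    apply: big1 => j _; have se := size_eta r w (ltn_ord j).
    by rewrite coefZ [(Defs.eta _ _ _ _)`_b]nth_default ?mulr0 // (leq_trans se bl).
  have Gz m : (m < l)%N -> G m = 0.
    move=> ml; apply/polyP => a; rewrite coef0; case: (ltnP a s) => asl; last first.
      by rewrite nth_default // (leq_trans (sG m ml) asl).
    have := congr1 (horner^~ (w ^+ (1 + m * r))) (Hpoly (Ordinal asl)).
    rewrite horner_sum horner0 /=.
    under eq_bigr => j _ do rewrite hornerZ (eta_eval pw (ltn_ord j) ml).
    move=> H; rewrite -[RHS]H -[LHS](sum_delta (fun j : 'I_l => (G j)`_a) (Ordinal ml)) /=.
    by apply: eq_bigr => j _; rewrite eq_sym.
  have := Gz j1 jl; rewrite /G => /eqP; rewrite mulf_eq0 (negbTE (pn0 _ jl)) orbF.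
  move=> /eqP /(congr1 (fun q : {poly F} => q`_i1)); rewrite coef_poly il coef0.
  done.
rewrite eqEsubv; apply/andP; split.
  apply/span_subvP => x /allpairsPdep [j [i [jin iin ->]]].
  move: jin; rewrite mem_iota add0n => /andP[_ jl].
  have [_ _ h] := hp j jl; apply/h; exists 'X^i; done.
apply/subvP => c cC.
pose cq (j : 'I_l) := \sum_(i < s) c i j *: 'X^i.
pose P := \sum_(j < l) (cq j)%:P * 'X^j.
have toRP : toR s l alpha beta P = c.
  apply/matrixP => a b; rewrite mxE.
  rewrite (@Pdiv.CommonIdomain.modp_small _ P); last first.
    rewrite size_XnsubC // ltnS.
    apply: (big_ind (fun p : {poly {poly F}} => (size p <= l)%N)).
    - by rewrite size_poly0.
    - by move=> p1 q1 hp1 hq1; apply: leq_trans (size_add _ _) _; rewrite geq_max hp1 hq1.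
    - move=> j _; rewrite mul_polyC; apply: leq_trans (size_scale_leq _ _) _.
      by rewrite size_polyXn.
  have -> : P`_b = cq b.
    rewrite coef_sum -[RHS](sum_delta cq b); apply: eq_bigr => j _.
    by rewrite coefCM coefXn.
  rewrite modp_small ?coef_cq // size_XnsubC // ltnS size_cq.
  done.
set om := fun k : nat => w ^+ (1 + k * r).
pose f (k : nat) := \sum_(j < l) (om k) ^+ j *: cq j.
have fC k : (k < l)%N -> toR s l alpha beta (etaf l r w k (f k)) \in C.
  move=> kl; rewrite /f -(@ideal_comp F s l r alpha beta w k cq pw wl kl).
  by apply: hI; rewrite -/P toRP.
have decomp : c = \sum_(k < l) toR s l alpha beta (etaf l r w k (f k)).
  apply/matrixP => a b; rewrite summxE.
  under eq_bigr => k _ do rewrite (@toR_etaf F s l r alpha beta w k _ l0 (ltn_ord k)) mxE.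
  have fk k : (f k %% Xs)`_a = \sum_(j < l) om k ^+ j * c a j.
    rewrite modp_small; last first.
      rewrite size_XnsubC // ltnS.
      apply: (big_ind (fun p : {poly F} => (size p <= s)%N)).
      - by rewrite size_poly0.
      - by move=> p1 q1 hp1 hq1; apply: leq_trans (size_add _ _) _; rewrite geq_max hp1 hq1.
      - by move=> j _; apply: leq_trans (size_scale_leq _ _) _; rewrite size_cq.
    by rewrite coef_sum; apply: eq_bigr => j _; rewrite coefZ coef_cq.
  under eq_bigr do rewrite fk mulr_suml.
  rewrite exchange_big /=.
  rewrite -[LHS](sum_delta (c a) b); apply: eq_bigr => j _.
  have L : \sum_(k < l) om k ^+ j * (Defs.eta l r w k)`_b = ('X^j : {poly F})`_b.
    rewrite -(lagr_Xn pw (ltn_ord j)) coef_sum; apply: eq_bigr => k _.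
    by rewrite coefZ.
  rewrite coefXn in L; rewrite -L mulr_sumr; apply: eq_bigr => k _.
  by rewrite mulrA [c a j * _]mulrC.
rewrite decomp; apply: rpred_sum => k _.
have [_ _ h] := hp k (ltn_ord k).
have [g eg] := (h (f k)).1 (fC k (ltn_ord k)).
rewrite (@toR_etaf_mod F s l r alpha beta w k _ _ l0 (ltn_ord k) eg).
exact: inspan.
Qed.
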